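(* For every positive integer $\alpha$ and every integer $k>1$, $$N_\alpha(k,k)\le (k^3-k^2+k)\binom{k}{2}.$$
   Context: A $k$-power is a word $u^k=uu\cdots u$ ($k$ copies) for a nonempty word $u$. A $k$-anti-power is a word $w=w_1\cdots w_k$ with $|w_1|=\cdots=|w_k|$ and $w_1,\dots,w_k$ pairwise distinct. $N_\alpha(k,k)$ denotes the smallest positive integer $N$ such that every word of length $N$ over an alphabet of size $\alpha$ contains a factor (contiguous subword) that is a $k$-power or a $k$-anti-power. *)

(* Defs.v *)
From mathcomp Require Import all_boot.
Set Implicit Arguments. Unset Strict Implicit. Unset Printing Implicit Defensive.

Definition factor (T : eqType) (u w : seq T) : bool := infix u w.

Definition is_kpower (T : eqType) (k : nat) (w : seq T) : Prop :=
  exists u : seq T, u != [::] /\ w = flatten (nseq k u).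

Definition is_kantipower (T : eqType) (k : nat) (w : seq T) : Prop :=
  exists bs : seq (seq T),
    [/\ size bs = k, w = flatten bs,
        (forall b1 b2, b1 \in bs -> b2 \in bs -> size b1 = size b2) & uniq bs].

Definition forces (alpha k N : nat) : Prop :=
  forall w : seq 'I_alpha, size w = N ->
    exists v : seq 'I_alpha, factor v w /\ (is_kpower k v \/ is_kantipower k v).

Definition is_N_alpha_kk (alpha k N : nat) : Prop :=
  [/\ 0 < N, forces alpha k N & forall M, 0 < M -> forces alpha k M -> N <= M].

(* Main.v *)
Require Import Defs.
From mathcomp Require Import all_boot zify.
From Stdlib Require Import Classical.

Lemma infix_take_drop (T:eqType) (w: seq T) a n : infix (take n (drop a w)) w.
Proof. apply/infixP; exists (take a w), (drop n (drop a w)); by rewrite !cat_take_drop. Qed.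

Lemma flat_blocks (T : Type) (w:seq T) m k a :
  flatten [seq take m (drop (i*m) w) | i <- iota a k] = take (k*m) (drop (a*m) w).
Proof.
elim: k a => [|k IH] a /=; first by rewrite take0.
by rewrite IH !mulSn takeD drop_drop.
Qed.

Lemma kpow (T : Type) (x0:T) w a p k : 0 < p -> a + k*p <= size w ->
  (forall e, e < k.-1 * p -> nth x0 w (a+e) = nth x0 w (a+e+p)) ->
  take (k*p) (drop a w) = flatten (nseq k (take p (drop a w))).
Proof.
elim: k a => [|k IH] a hp hs hper; first by rewrite mul0n take0.
rewrite mulSn takeD drop_drop /=; congr (_ ++ _).
case: k IH hs hper => [|k] IH hs hper; first by rewrite mul0n take0.
rewrite IH //; last first.
- move=> e he.
  have -> : p + a + e = a + (p + e) by lia.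
  rewrite hper //=; nia.
- nia.
congr (flatten (nseq _ _)).
have s1: size (take p (drop (p+a) w)) = p by rewrite size_takel // size_drop; nia.
have s2: size (take p (drop a w)) = p by rewrite size_takel // size_drop; nia.
apply: (@eq_from_nth _ x0); first by rewrite s1 s2.
move=> e; rewrite s1 => he; rewrite !nth_take // !nth_drop.
have := hper e; rewrite /= => ->; last by nia.
congr (nth _ _ _); lia.
Qed.

Lemma min_ex (P : nat -> Prop) n : P n -> exists N, P N /\ (forall M, P M -> N <= M).
Proof.
elim: n {-2}n (leqnn n) => [|n IH] m hm hP.
  by exists m; split => // M _; move: hm; rewrite leqn0 => /eqP ->.
case: (classic (exists M, P M /\ M < m)) => [[M [hPM hM]]|hno].
  by apply: (IH M) => //; lia.
exists m; split => // M hPM; rewrite leqNgt; apply/negP => hlt; apply: hno; by exists M.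
Qed.

Lemma blocks_eq (T : eqType) (x0 : T) w m i j t : take m (drop (i*m) w) = take m (drop (j*m) w) ->
  t < m -> nth x0 w (i*m + t) = nth x0 w (j*m + t).
Proof. move=> h ht; have := congr1 (fun s => nth x0 s t) h; by rewrite /= !nth_take // !nth_drop. Qed.

Lemma main (T : eqType) (x0 : T) (k : nat) (w : seq T) : 1 < k ->
  size w = k * (k * (k-1) * 'C(k,2) + 'C(k,2)) ->
  exists v, factor v w /\ (is_kpower k v \/ is_kantipower k v).
Proof.
move=> hk hw.
set c := 'C(k,2) in hw; set A := k * (k-1) * c in hw.
pose bs m := [seq take m (drop (i*m) w) | i <- iota 0 k].
case: (boolP [exists x : 'I_c.+1, uniq (bs (A+x))]).
  case/existsP => x hu; exists (flatten (bs (A+x))); split.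
    by rewrite /factor /bs flat_blocks; apply: infix_take_drop.
  right; exists (bs (A+x)); split => //; first by rewrite size_map size_iota.
  move=> b1 b2 /mapP[i1 hi1 ->] /mapP[i2 hi2 ->].
  rewrite mem_iota add0n in hi1; rewrite mem_iota add0n in hi2.
  have hx := ltn_ord x.
  have h1 : i1.+1 * (A + x) <= size w by rewrite hw; apply: leq_mul => //; lia.
  have h2 : i2.+1 * (A + x) <= size w by rewrite hw; apply: leq_mul => //; lia.
  rewrite mulSn in h1 h2; rewrite !size_takel // size_drop; lia.
rewrite negb_exists => /forallP hnu.
pose P m (ij : 'I_k * 'I_k) : bool :=
  (ij.1 < ij.2) && (take m (drop (ij.1*m) w) == take m (drop (ij.2*m) w)).
have hex : forall x : 'I_c.+1, exists ij, P (A+x) ij.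
  move=> x; have /uniqPn := hnu x => /(_ [::]) [i [j [hij hj heq]]].
  rewrite size_map size_iota in hj.
  have hi : i < k by lia.
  exists (Ordinal hi, Ordinal hj); rewrite /P /= hij /=.
  move: heq; rewrite /bs !(nth_map 0) ?size_iota // !nth_iota // !add0n => ->; by [].
pose g (x : 'I_c.+1) := odflt set0 (omap (fun ij : 'I_k * 'I_k => [set ij.1; ij.2]) [pick ij | P (A+x) ij]).
have hg : forall x : 'I_c.+1, exists ij, P (A+x) ij /\ g x = [set ij.1; ij.2].
  move=> x; rewrite /g; case: pickP => [ij hij | hno]; first by exists ij.
  by have [ij hij] := hex x; rewrite hno in hij.
have [x [y [hxy hgxy]]] : exists x y : 'I_c.+1, x < y /\ g x = g y.
  case: (boolP [exists x : 'I_c.+1, exists y : 'I_c.+1, (x < y) && (g x == g y)]).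
    by case/existsP => x /existsP [y /andP [h1 /eqP h2]]; exists x, y.
  rewrite negb_exists => /forallP hn.
  have ginj : injective g.
    move=> x y hxy; case: (ltngtP x y) => h; last by apply: val_inj.
      by have := hn x => /existsPn /(_ y); rewrite h hxy eqxx.
    by have := hn y => /existsPn /(_ x); rewrite h hxy eqxx.
  have hsub : [set g x | x in 'I_c.+1] \subset [set S : {set 'I_k} | #|S| == 2].
    apply/subsetP => S /imsetP [x _ ->]; rewrite inE.
    have [ij [/andP [hlt _] ->]] := hg x; rewrite cards2.
    by rewrite neq_ltn hlt.
  have := subset_leq_card hsub; rewrite card_imset // card_draws card_ord.
  by rewrite card_ord -/c ltnn.
have [[i j] [/andP [hij /eqP E1] hgx]] := hg x.
have [[i' j'] [/andP [hij' /eqP E2] hgy]] := hg y.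
simpl in *.
have [hi hj] : i = i' /\ j = j'.
  move: hgxy; rewrite hgx hgy => hS.
  have : i \in [set i'; j'] by rewrite -hS !inE eqxx.
  have : j \in [set i'; j'] by rewrite -hS !inE eqxx orbT.
  rewrite !inE => /orP [] /eqP hj1 /orP [] /eqP hi1; subst; try (split; done);
  exfalso; rewrite ?ltnn in hij hij'; try lia.
subst i' j'.
have hy := ltn_ord y.
have F1 := @blocks_eq _ x0 _ _ _ _ _ E1; have F2 := @blocks_eq _ x0 _ _ _ _ _ E2.
move: F1 F2 hxy hy hij (ltn_ord j).
move: (nat_of_ord x) (nat_of_ord y) (nat_of_ord i) (nat_of_ord j).
clear E1 E2 hgx hgy hgxy hij' hg g hex P hnu x y i j.
move=> x y i j F1 F2 hxy hy hij hj.
have [d hd] : exists d, j = i + d by exists (j - i); lia.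
have [del hdel] : exists del, y = x + del by exists (y - x); lia.
subst j y.
have hd0 : 0 < d by lia.
have hdel0 : 0 < del by lia.
have hdelc : del <= c by lia.
have hK0 : (k-1)*d + i <= k*(k-1).
  have h1 : (k-1)*d <= (k-1)*(k-1) by apply: leq_mul => //; lia.
  have h2 : k * (k-1) = (k-1)*(k-1) + (k-1).
    have e : k = (k-1).+1 by lia.
    by rewrite {1}e mulSn addnC.
  lia.
have hK : ((k-1)*d + i) * del <= A + x.
  apply: (leq_trans (leq_mul hK0 hdelc)); rewrite /A; lia.
have hsz : (i+d)*(A+x) + i*del + k*(d*del) <= size w.
  have h1 : (i + d).+1 * (A + x) + d * del <= k * (A + x + del).
    rewrite [k * _]mulnDr; apply: leq_add; [apply: leq_mul => //; lia | apply: leq_mul => //; lia].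
  have h2 : k * (A + x + del) <= size w by rewrite hw; apply: leq_mul => //; lia.
  have h3 : k * (d * del) = (k-1)*d*del + d * del.
    have -> : k = (k-1).+1 by lia.
    by rewrite mulSn -mulnA addnC subSS subn0.
  rewrite mulSn in h1; rewrite h3; rewrite mulnDl in hK; lia.
exists (take (k*(d*del)) (drop ((i+d)*(A+x) + i*del) w)); split; first by apply: infix_take_drop.
left; exists (take (d*del) (drop ((i+d)*(A+x) + i*del) w)); split.
  have hp : 0 < d * del by rewrite muln_gt0 hd0.
  have hkp : d * del <= k * (d * del) by apply: leq_pmull; lia.
  apply/eqP => h; have := congr1 size h; rewrite size_takel /=; first by lia.
  rewrite size_drop; lia.
apply: (@kpow _ x0) => //; first by rewrite muln_gt0 hd0.
move=> e he.
have t1 : i*del + e < A + x.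
  rewrite mulnDl in hK; have : k.-1 * (d * del) = (k-1)*d*del by rewrite mulnA; lia.
  lia.
have := F1 _ t1; have := F2 e ltac:(lia) => e2 e1.
have -> : (i + d) * (A + x) + i * del + e = (i + d) * (A + x) + (i * del + e) by lia.
rewrite -e1.
have -> : (i + d) * (A + x) + (i * del + e) + d * del = (i + d) * (A + (x + del)) + e by rewrite !mulnDr !mulnDl; lia.
rewrite -e2; congr (nth _ _ _); rewrite !mulnDr; lia.
Qed.

Lemma arith k : (k ^ 3 - k ^ 2 + k) * 'C(k, 2) = k * (k * (k - 1) * 'C(k, 2) + 'C(k, 2)).
Proof.
have -> : k * (k * (k - 1) * 'C(k, 2) + 'C(k, 2)) = (k * (k * (k-1) + 1)) * 'C(k,2).
  by rewrite !mulnDr !mulnDl !muln1 !mulnA.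
congr (_ * _).
have e3 : k ^ 3 = k * (k * k) by rewrite !expnS expn0 muln1.
have e2 : k ^ 2 = k * k by rewrite !expnS expn0 muln1.
by rewrite e3 e2 mulnDr muln1 !mulnBr !muln1.
Qed.

Theorem corollary3p10 (alpha k : nat) :
  0 < alpha -> 1 < k ->
  exists N, is_N_alpha_kk alpha k N /\ N <= (k ^ 3 - k ^ 2 + k) * 'C(k, 2).
Proof.
move=> ha hk.
have hf : forces alpha k ((k ^ 3 - k ^ 2 + k) * 'C(k, 2)).
  move=> w hw; apply: (@main _ (Ordinal ha) k w hk); by rewrite hw arith.
have hpos : 0 < (k ^ 3 - k ^ 2 + k) * 'C(k, 2).
  rewrite muln_gt0 bin_gt0 hk andbT; lia.
have [N [[hN0 hNf] hmin]] :=
  @min_ex (fun M => 0 < M /\ forces alpha k M) _ (conj hpos hf).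
exists N; split; first by split => // M h0 hM; apply: hmin.
by apply: hmin.
Qed.
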